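(* Let $A$ be an HSD model, and let $\mathbf{E}(A)$ carry its canonical Euclidean Jordan algebra structure. Then: (a) every extremal unital outcome $x\in X(A)$ is a primitive idempotent; (b) if $A$ is uniform, then every unital outcome is extremal, hence a primitive idempotent; (c) if $A$ is both unital and uniform, it is a Jordan model.
   Context: A probabilistic model $A$ (finite-dimensional, state-complete, outcome-closed) has a test space $(X(A),\mathcal{M}(A))$ (tests are sets of outcomes covering $X(A)$) and a closed convex set $\Omega(A)$ of states, each a probability weight summing to $1$ on every test. Each outcome $x$ is identified with its evaluation functional $\hat x\in\mathbf{E}(A)$, where $\mathbf{E}(A)$ is the span of these functionals, ordered by the closed cone $\mathbf{E}(A)_+$ generated by them, with order unit $u=\sum_{x\in E}x$ for any test $E$. $A$ is HSD if the cone $\mathbf{E}(A)_+$ is homogeneous (its order-automorphism group acts transitively on its interior) and self-dual with respect to some inner product. For such $A$, $\mathbf{E}(A)$ carries a canonical Euclidean Jordan algebra product $\bullet$ with identity $u$, whose cone of squares is $\mathbf{E}(A)_+$, and whose trace inner product $\langle a,b\rangle=\mathrm{Tr}(a\bullet b)$ is self-dualizing with $\langle a,u\rangle=\mathrm{Tr}(a)$; states are identified with elements of $\mathbf{E}(A)_+$ via this inner product. An idempotent is $e\in\mathbf{E}(A)_+$ with $e\bullet e=e$; it is primitive if it is non-zero and not a sum of other non-zero idempotents. An outcome $x$ is extremal if it generates an extremal ray of $\mathbf{E}(A)_+$, and unital if some state $\alpha\in\Omega(A)$ has $\alpha(x)=1$. $A$ is unital if all its outcomes are unital. $A$ is uniform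 if all its tests have the same cardinality $n$ and the probability weight $\mu(x)\equiv1/n$ belongs to $\Omega(A)$. A Jordan model is an HSD model in which every outcome in $X(A)$ is a primitive idempotent of $\mathbf{E}(A)$. *)

(* Defs.v *)
(* A finite-dimensional probabilistic model is encoded
   concretely: E(A) is identified with 'rV[R]_d (via a basis), outcomes are
   sent to their evaluation functionals  hat x : 'rV_d  (which span E(A)),
   and states are encoded as vectors  a : 'rV_d  of the dual space
   V(A) = E(A)^* (paired with E(A) by the standard dot product), so that the
   probability weight of the state a is  x |-> dotv a (hat x). *)
From HB Require Import structures.
From mathcomp Require Import all_boot all_order all_algebra.
From mathcomp Require Import reals.
Set Implicit Arguments.
Unset Strict Implicit.
Unset Printing Implicit Defensive.
Import Order.TTheory GRing.Theory Num.Theory.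
Local Open Scope ring_scope.

Section Defs.
Variables (R : realType) (d : nat).
Notation vec := 'rV[R]_d.

Definition dotv (a b : vec) : R := \sum_(i < d) a 0 i * b 0 i.

Definition near_vec (e : R) (v w : vec) : Prop :=
  forall i : 'I_d, `|v 0 i - w 0 i| < e.

Definition closed_vec (S : vec -> Prop) : Prop :=
  forall v, (forall e, 0 < e -> exists w, S w /\ near_vec e v w) -> S v.

Definition interior_vec (S : vec -> Prop) (v : vec) : Prop :=
  exists2 e, 0 < e & forall w, near_vec e v w -> S w.

Definition convex_vec (S : vec -> Prop) : Prop :=
  forall a b t, S a -> S b -> 0 <= t <= 1 -> S (t *: a + (1 - t) *: b).

Definition span_vec (S : vec -> Prop) (v : vec) : Prop :=
  exists k (c : 'I_k -> R) (s : 'I_k -> vec),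
    (forall i, S (s i)) /\ v = \sum_(i < k) c i *: s i.

Definition cone_hull (S : vec -> Prop) (v : vec) : Prop :=
  exists k (c : 'I_k -> R) (s : 'I_k -> vec),
    (forall i, 0 <= c i /\ S (s i)) /\ v = \sum_(i < k) c i *: s i.

Definition closure_vec (S : vec -> Prop) (v : vec) : Prop :=
  forall e, 0 < e -> exists w, S w /\ near_vec e v w.

Section Model.
Variables (X : eqType) (M : (seq X) -> Prop) (hat : X -> vec) (Om : vec -> Prop).

Definition pr (a : vec) (x : X) : R := dotv a (hat x).

Definition Epos : vec -> Prop := closure_vec (cone_hull (fun v => exists x, v = hat x)).

Definition is_unit (u : vec) : Prop :=
  forall E, M E -> u = \sum_(x <- E) hat x.

(* A finite-dimensional, state-complete, outcome-closed probabilistic model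
   with order unit u (tests are finite sets, given as duplicate-free lists). *)
Definition prob_model (u : vec) : Prop :=
  (forall E, M E -> uniq E) /\
  (forall x, exists2 E, M E & x \in E) /\
      (forall a, Om a -> (forall x, 0 <= pr a x) /\
                         (forall E, M E -> \sum_(x <- E) pr a x = 1)) /\
  convex_vec Om /\ closed_vec Om /\
      (forall v, span_vec (fun w => exists x, w = hat x) v) /\
      (forall v, span_vec Om v) /\
  is_unit u /\
      (forall a, Om a <-> ((forall e, Epos e -> 0 <= dotv a e) /\ dotv a u = 1)) /\
  closed_vec (fun v => exists x, v = hat x).

Definition order_aut (A : 'M[R]_d) : Prop :=
  A \in unitmx /\ (forall v, Epos (v *m A) <-> Epos v).

Definition homogeneous : Prop :=
  forall a b, interior_vec Epos a -> interior_vec Epos b ->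
    exists2 A, order_aut A & a *m A = b.

Definition ipv (G : 'M[R]_d) (a b : vec) : R := (a *m G *m b^T) 0 0.
Definition inner_product (G : 'M[R]_d) : Prop :=
  G^T = G /\ (forall v, v != 0 -> 0 < ipv G v v).

Definition self_dual : Prop :=
  exists2 G, inner_product G &
    (forall a, Epos a <-> (forall b, Epos b -> 0 <= ipv G a b)).

Definition HSD : Prop := homogeneous /\ self_dual.

Definition EJA_product (jp : vec -> vec -> vec) (u : vec) : Prop :=
  (forall (t : R) a b c, jp (t *: a + b) c = t *: jp a c + jp b c) /\
  (forall a b, jp a b = jp b a) /\
  (forall a b, jp (jp a b) (jp a a) = jp a (jp b (jp a a))) /\
  (forall a, jp u a = a) /\
  (exists2 G, inner_product G &
     forall a b c, ipv G (jp a b) c = ipv G b (jp a c)) /\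
  (forall v, Epos v <-> exists a, v = jp a a).

Definition idempotent (jp : vec -> vec -> vec) (e : vec) : Prop :=
  Epos e /\ jp e e = e.

Definition primitive_idempotent (jp : vec -> vec -> vec) (e : vec) : Prop :=
  [/\ idempotent jp e, e != 0 &
      ~ exists k (f : 'I_k -> vec),
          (forall i, idempotent jp (f i) /\ f i != 0 /\ f i != e) /\
          e = \sum_(i < k) f i].

Definition extremal (v : vec) : Prop :=
  [/\ Epos v, v != 0 &
      forall a b, Epos a -> Epos b -> v = a + b -> exists2 t, 0 <= t & a = t *: v].

Definition unital_outcome (x : X) : Prop := exists2 a, Om a & pr a x = 1.

Definition unital_model : Prop := forall x, unital_outcome x.

Definition uniform : Prop :=
  exists n : nat, (forall E, M E -> size E = n) /\
    exists2 m, Om m & forall x, pr m x = n%:R^-1.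

Definition jordan_model (jp : vec -> vec -> vec) : Prop :=
  HSD /\ forall x, primitive_idempotent jp (hat x).

End Model.
End Defs.

(* Main.v *)
Require Import Defs.
From HB Require Import structures.
From mathcomp Require Import all_boot all_order all_algebra.
From mathcomp Require Import reals.
From mathcomp Require Import complex.
From mathcomp Require Import ring lra zify.
From Stdlib Require Import Classical.
Set Implicit Arguments. Unset Strict Implicit. Unset Printing Implicit Defensive.
Import Order.TTheory GRing.Theory Num.Theory.
Local Open Scope ring_scope.

Section RP.
Variable R : realType.
Local Notation C := (R[i]).
Local Notation toC := (real_complex R).

Lemma croot (q : {poly R}) : size q != 1%N -> exists z : C, root (map_poly toC q) z.
Proof.
move=> h; apply/closed_rootP; by rewrite size_map_poly.
Qed.

Lemma realroot (q : {poly R}) (a : R) : root (map_poly toC q) (a%:C)%C -> root q a.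
Proof. by rewrite /root horner_map /= fmorph_eq0. Qed.

Lemma quad_dvd (q : {poly R}) (a b : R) : root (map_poly toC q) (a +i* b)%C -> b != 0 ->
  ('X - a%:P)^+2 + (b^+2)%:P %| q.
Proof.
move=> qz bn0; set Q := _ + _.
have Qz : (map_poly toC Q).[(a +i* b)%C] = 0.
  rewrite /Q rmorphD rmorphXn rmorphB /= map_polyX !map_polyC !hornerE /=.
  by rewrite /= expr2; simpc; rewrite expr2 addNr.
have sQ : size Q = 3.
  rewrite /Q size_polyDl ?size_exp_XsubC // size_polyC.
  by case: (_ != 0).
apply/modp_eq0P; set r := q %% Q.
have sr : (size r <= 2)%N.
  have := ltn_modp q Q; rewrite -size_poly_eq0 sQ /= => h.
  by rewrite -ltnS; apply: etrans h.
have rz : (map_poly toC r).[(a +i* b)%C] = 0.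
  have := divp_eq q Q; rewrite -/r => E.
  move: qz; rewrite /root E rmorphD rmorphM /= hornerD hornerM Qz mulr0 add0r.
  by move/eqP.
move: rz; rewrite (@horner_coef_wide _ 2) ?size_map_poly // !big_ord_recr big_ord0 /=.
rewrite !coef_map /= expr0 expr1.
change ((0 +i* 0)%C + (r`_0 +i* 0)%C * (1 +i* 0)%C + (r`_1 +i* 0)%C * (a +i* b)%C = (0 +i* 0)%C -> r = 0).
set r0 := r`_0; set r1 := r`_1; simpc => /eqP; rewrite eq_complex /= => /andP[/eqP e1 /eqP e2].
have r10 : r1 = 0 by move: e2 => /eqP; rewrite mulf_eq0 (negbTE bn0) orbF => /eqP.
move: e1; rewrite r10 mul0r addr0 => r00.
apply/polyP => i; rewrite coef0; case: i => [|[|i]] //.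
by rewrite nth_default // (leq_trans sr).
Qed.

Lemma sizeQ (a b : R) : size (('X - a%:P)^+2 + (b^+2)%:P) = 3.
Proof.
rewrite size_polyDl ?size_exp_XsubC // size_polyC.
by case: (_ != 0).
Qed.

Lemma ndvd_small (p f : {poly R}) : f != 0 -> (size f < size p)%N -> ~~ (p %| f).
Proof. by move=> fn0 lt; apply/negP => /(dvdp_leq fn0); rewrite leqNgt lt. Qed.

Lemma split_sos (p : {poly R}) : p != 0 ->
  (forall f g : {poly R}, p %| f * f + g * g -> p %| f) ->
  exists c (rs : seq R), uniq rs /\ p = c *: \prod_(r <- rs) ('X - r%:P).
Proof.
move=> pn0 Hsos.
have SR : forall r h0, p <> ('X - r%:P)^+2 * h0.
  move=> r h0 E.
  have h0n0 : h0 != 0 by apply: contra pn0 => /eqP h; rewrite E h mulr0.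
  have fn0 : ('X - r%:P) * h0 != 0 by rewrite mulf_neq0 ?polyXsubC_eq0.
  have : p %| ('X - r%:P) * h0.
    apply: (Hsos _ 0); rewrite mul0r addr0.
    have -> : ('X - r%:P) * h0 * (('X - r%:P) * h0) = p * h0 by rewrite E; ring.
    exact: dvdp_mulr.
  apply/negP/ndvd_small => //.
  rewrite E !size_mul ?expf_neq0 ?polyXsubC_eq0 ?mulf_neq0 // !size_XsubC.
  have : (0 < size h0)%N by rewrite size_poly_gt0.
  by case: (size h0).
have NR : forall (a b : R), b != 0 -> ~~ (('X - a%:P)^+2 + (b^+2)%:P %| p).
  move=> a b bn0; apply/negP => /dvdpP [h0 E].
  have Qn0 : ('X - a%:P)^+2 + (b^+2)%:P != 0 by rewrite -size_poly_eq0 sizeQ.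
  have h0n0 : h0 != 0 by apply: contra pn0 => /eqP h; rewrite E h mul0r.
  have fn0 : ('X - a%:P) * h0 != 0 by rewrite mulf_neq0 ?polyXsubC_eq0.
  have : p %| ('X - a%:P) * h0.
    apply: (Hsos _ (b%:P * h0)).
    have -> : ('X - a%:P) * h0 * (('X - a%:P) * h0) + b%:P * h0 * (b%:P * h0) = p * h0.
      by rewrite E rmorphXn /=; ring.
    exact: dvdp_mulr.
  apply/negP/ndvd_small => //.
  rewrite E !size_mul ?sizeQ ?size_XsubC ?polyXsubC_eq0 //.
  have : (0 < size h0)%N by rewrite size_poly_gt0.
  lia.
suff H : forall n (q : {poly R}), (size q <= n)%N -> q %| p -> q != 0 ->
  exists c (rs : seq R), uniq rs /\ q = c *: \prod_(r <- rs) ('X - r%:P).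
  by apply: (H (size p) p) => //; rewrite dvdpp.
elim=> [|n IH] q qs qp qn0.
  by move: qs; rewrite leqn0 size_poly_eq0 (negbTE qn0).
case: (eqVneq (size q) 1%N) => [s1|s1].
  exists q`_0, [::]; split => //; rewrite big_nil.
  by rewrite {1}(size1_polyC (eq_leq s1)) -mul_polyC mulr1.
have [[a b] qz] := croot s1.
case: (eqVneq b 0) => [b0|bn0]; last first.
  by move: (NR a b bn0); rewrite (dvdp_trans (quad_dvd qz bn0) qp).
rewrite b0 in qz.
have /factor_theorem [q' Eq] := realroot qz.
have q'n0 : q' != 0 by apply: contra qn0 => /eqP h; rewrite Eq h mul0r.
have q'p : q' %| p by apply: dvdp_trans qp; rewrite Eq dvdp_mulIl.
have q's : (size q' <= n)%N.
  move: qs; rewrite Eq size_mul ?polyXsubC_eq0 // size_XsubC addn2 /=.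
  by [].
have [c [rs [urs Eq']]] := IH q' q's q'p q'n0.
have ars : a \notin rs.
  apply/negP => ars.
  have Er : \prod_(y <- rs) ('X - y%:P) = ('X - a%:P) * \prod_(y <- rem a rs) ('X - y%:P).
    by rewrite (big_rem a ars).
  have : ('X - a%:P)^+2 %| p.
    apply: dvdp_trans qp; rewrite Eq Eq' Er -scalerAl.
    apply: (@dvdp_trans _ (('X - a%:P) * \prod_(y <- rem a rs) ('X - y%:P) * ('X - a%:P))).
      by rewrite mulrC mulrA expr2 dvdp_mulr.
    have cn0 : c != 0 by apply: contra qn0 => /eqP c0; rewrite Eq Eq' c0 scale0r mul0r.
    by rewrite dvdpZr // dvdpp.
  by case/dvdpP => h0 Eh; apply: (SR a h0); rewrite Eh mulrC.
exists c, (a :: rs); split; first by rewrite /= ars.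
by rewrite Eq Eq' big_cons -scalerAl mulrC.
Qed.
End RP.

Lemma ipvDl_gen (R : realType) d (G : 'M[R]_d) a b c : ipv G (a + b) c = ipv G a c + ipv G b c.
Proof. by rewrite /ipv !mulmxDl mxE. Qed.
Lemma ipvZl_gen (R : realType) d (G : 'M[R]_d) t a c : ipv G (t *: a) c = t * ipv G a c.
Proof. by rewrite /ipv -!scalemxAl mxE. Qed.

Section Jordan.
Variables (R : realType) (d : nat).
Notation vec := 'rV[R]_d.
Variables (jp : vec -> vec -> vec) (u : vec) (G : 'M[R]_d).
Hypothesis Hlin : forall (t : R) a b c, jp (t *: a + b) c = t *: jp a c + jp b c.
Hypothesis HC : forall a b, jp a b = jp b a.
Hypothesis HJ : forall a b, jp (jp a b) (jp a a) = jp a (jp b (jp a a)).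
Hypothesis Hu : forall a, jp u a = a.
Hypothesis HG : inner_product G.
Hypothesis Hass : forall a b c, ipv G (jp a b) c = ipv G b (jp a c).

Local Notation "a \oj b" := (jp a b) (at level 40, left associativity).
Local Notation ip := (ipv G).

Lemma jpDl a b c : (a + b) \oj c = a \oj c + b \oj c.
Proof. by have := Hlin 1 a b c; rewrite !scale1r. Qed.
Lemma jp0l c : 0 \oj c = 0.
Proof. have h := Hlin 1 0 0 c; rewrite !scale1r addr0 in h.
by apply: (@addrI _ (jp 0 c)); rewrite addr0 -h. Qed.
Lemma jpZl t a c : (t *: a) \oj c = t *: (a \oj c).
Proof. by have := Hlin t a 0 c; rewrite !addr0 jp0l addr0. Qed.
Lemma jpNl a c : (- a) \oj c = - (a \oj c).
Proof. by rewrite -scaleN1r jpZl scaleN1r. Qed.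
Lemma jpBl a b c : (a - b) \oj c = a \oj c - b \oj c.
Proof. by rewrite jpDl jpNl. Qed.
Lemma jpDr a b c : c \oj (a + b) = c \oj a + c \oj b.
Proof. by rewrite HC jpDl !(HC c). Qed.
Lemma jpZr t a c : c \oj (t *: a) = t *: (c \oj a).
Proof. by rewrite HC jpZl HC. Qed.
Lemma jpNr a c : c \oj (- a) = - (c \oj a).
Proof. by rewrite HC jpNl HC. Qed.
Lemma jpBr a b c : c \oj (a - b) = c \oj a - c \oj b.
Proof. by rewrite jpDr jpNr. Qed.
Lemma jp0r c : c \oj 0 = 0.
Proof. by rewrite HC jp0l. Qed.
Lemma jpu a : a \oj u = a.
Proof. by rewrite HC Hu. Qed.
Lemma jp_suml I (r : seq I) (P : pred I) (F : I -> vec) c :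
  (\sum_(i <- r | P i) F i) \oj c = \sum_(i <- r | P i) (F i \oj c).
Proof.
elim/big_rec2: _ => [|i y1 y2 _ <-]; first by rewrite jp0l.
by rewrite jpDl.
Qed.
Lemma jp_sumr I (r : seq I) (P : pred I) (F : I -> vec) c :
  c \oj (\sum_(i <- r | P i) F i) = \sum_(i <- r | P i) (c \oj F i).
Proof. by rewrite HC jp_suml; apply: eq_bigr => i _; rewrite HC. Qed.

Lemma ipC a b : ip a b = ip b a.
Proof.
have [GT _] : G^T = G /\ _ := HG; rewrite /ipv.
transitivity ((a *m G *m b^T)^T 0 0); first by rewrite [RHS]mxE.
by rewrite !trmx_mul trmxK GT mulmxA.
Qed.

Lemma jordan_lin a z w :
  ((a \oj a) \oj z) \oj w = (a \oj a) \oj (z \oj w) + 2 *: ((a \oj z) \oj (a \oj w))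
     - 2 *: (a \oj (z \oj (a \oj w))).
Proof.
have h1 := HJ (a + w) z; have h2 := HJ (a - w) z; have h3 := HJ w z.
rewrite !jpDl !jpDr (HC w a) in h1.
rewrite !jpBl !jpBr (HC w a) in h2.
rewrite (HC (a \oj a) z) (HC _ w) (HC (a \oj a)) (HC z w).
apply/rowP => i.
move/(congr1 (fun v : vec => v 0 i)): h1; move/(congr1 (fun v : vec => v 0 i)): h2.
move/(congr1 (fun v : vec => v 0 i)): h3.
rewrite !mxE. lra.
Qed.

Lemma ipDl a b c : ip (a + b) c = ip a c + ip b c.
Proof. by rewrite /ipv !mulmxDl mxE. Qed.
Lemma ipZl t a c : ip (t *: a) c = t * ip a c.
Proof. by rewrite /ipv -!scalemxAl mxE. Qed.
Lemma ipNl a c : ip (- a) c = - ip a c.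
Proof. by rewrite -scaleN1r ipZl mulN1r. Qed.
Lemma ipBl a b c : ip (a - b) c = ip a c - ip b c.
Proof. by rewrite ipDl ipNl. Qed.
Lemma ip0l c : ip 0 c = 0.
Proof. by rewrite -(scale0r 0) ipZl mul0r. Qed.
Lemma ipDr a b c : ip c (a + b) = ip c a + ip c b.
Proof. by rewrite ipC ipDl !(ipC c). Qed.
Lemma ipZr t a c : ip c (t *: a) = t * ip c a.
Proof. by rewrite ipC ipZl ipC. Qed.
Lemma ipNr a c : ip c (- a) = - ip c a.
Proof. by rewrite ipC ipNl ipC. Qed.
Lemma ipBr a b c : ip c (a - b) = ip c a - ip c b.
Proof. by rewrite ipDr ipNr. Qed.
Lemma ip0r c : ip c 0 = 0.
Proof. by rewrite ipC ip0l. Qed.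
Lemma ip_suml I (r : seq I) (P : pred I) (F : I -> vec) c :
  ip (\sum_(i <- r | P i) F i) c = \sum_(i <- r | P i) ip (F i) c.
Proof.
elim/big_rec2: _ => [|i y1 y2 _ <-]; first by rewrite ip0l.
by rewrite ipDl.
Qed.
Lemma ip_sumr I (r : seq I) (P : pred I) (F : I -> vec) c :
  ip c (\sum_(i <- r | P i) F i) = \sum_(i <- r | P i) ip c (F i).
Proof. by rewrite ipC ip_suml; apply: eq_bigr => i _; rewrite ipC. Qed.
Lemma ip_ge0 a : 0 <= ip a a.
Proof.
have [_ H] : G^T = G /\ (forall v, v != 0 -> 0 < ip v v) := HG.
case: (eqVneq a 0) => [->|/H /ltW //]; by rewrite ip0l.
Qed.
Lemma ip_eq0 a : ip a a = 0 -> a = 0.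
Proof.
have [_ H] : G^T = G /\ (forall v, v != 0 -> 0 < ip v v) := HG.
by case: (eqVneq a 0) => // /H; rewrite lt_def => /andP[/eqP].
Qed.
Lemma ip_sq_u a : ip (a \oj a) u = ip a a.
Proof. by rewrite Hass jpu. Qed.
Lemma sq_eq0 a : a \oj a = 0 -> a = 0.
Proof. by move=> h; apply: ip_eq0; rewrite -ip_sq_u h ip0l. Qed.


Section Idem.
Variable e : vec.
Hypothesis he : e \oj e = e.

Lemma idem_L w : e \oj w = 3 *: (e \oj (e \oj w)) - 2 *: (e \oj (e \oj (e \oj w))).
Proof.
have := jordan_lin e e w; rewrite he he => E; rewrite {1}E.
by apply/rowP => i; rewrite !mxE; lra.
Qed.

Lemma idem_decomp w : ip e (w \oj w) =
  ip (e \oj w) (e \oj w) + 4 * ip (e \oj w - e \oj (e \oj w)) (e \oj w - e \oj (e \oj w)).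
Proof.
set A := e \oj w; set B := e \oj A; set C := e \oj B; set D := e \oj C.
have f0 : ip e (w \oj w) = ip A w by rewrite /A HC Hass.
have f1 : ip A A = ip B w by rewrite [RHS]Hass.
have f2 : ip A B = ip C w by rewrite [RHS]Hass ipC.
have f3 : ip B B = ip D w by rewrite [RHS]Hass /C Hass.
have r1 : ip A w = 3 * ip B w - 2 * ip C w.
  by rewrite {1}/A idem_L ipBl !ipZl.
have r2 : ip B w = 3 * ip C w - 2 * ip D w.
  by rewrite {1}/B idem_L ipBl !ipZl.
rewrite f0 !ipBl !ipBr (ipC B A) f1 f2 f3. lra.
Qed.

Lemma idem_ge0 w : 0 <= ip e (w \oj w).
Proof. by rewrite idem_decomp addr_ge0 ?mulr_ge0 ?ip_ge0. Qed.

Lemma idem_eq0 w : ip e (w \oj w) = 0 -> e \oj w = 0.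
Proof.
rewrite idem_decomp => H; apply: ip_eq0; apply/eqP; rewrite eq_le ip_ge0 andbT.
by rewrite -H lerDl mulr_ge0 ?ip_ge0.
Qed.
End Idem.

Section Pow.
Variable x : vec.
Definition pw n := iter n (jp x) u.
Lemma pwS n : pw n.+1 = x \oj pw n. Proof. by []. Qed.
Lemma pw0 : pw 0 = u. Proof. by []. Qed.
Lemma pw1 : pw 1 = x. Proof. by rewrite pwS pw0 jpu. Qed.

Lemma commx2 w : x \oj ((x \oj x) \oj w) = (x \oj x) \oj (x \oj w).
Proof. by rewrite (HC (x \oj x) (x \oj w)) HJ (HC w). Qed.

Lemma x2pw n : (x \oj x) \oj pw n = pw n.+2.
Proof.
elim: n => [|n IH]; first by rewrite pw0 jpu pwS pw1.
by rewrite pwS -commx2 IH.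
Qed.

Definition Pc (v : vec) := forall w, v \oj (x \oj w) = x \oj (v \oj w) /\
   v \oj ((x \oj x) \oj w) = (x \oj x) \oj (v \oj w).

Lemma Pc_pw n : Pc (pw n).
Proof.
suff: Pc (pw n) /\ Pc (pw n.+1) by case.
elim: n => [|n [IH1 IH2]].
  split=> w; first by rewrite pw0 !Hu.
  by rewrite pw1 commx2.
split=> // w.
have E v : pw n.+2 \oj v = (x \oj x) \oj (pw n \oj v) + 2 *: (pw n.+1 \oj (x \oj v))
     - 2 *: (x \oj (pw n \oj (x \oj v))).
  by rewrite -x2pw jordan_lin pwS.
split.
- rewrite !E !jpDr !jpNr !jpZr.
  rewrite (proj1 (IH2 (x \oj w))) (proj1 (IH1 (x \oj w))) (proj1 (IH1 w)).
  by rewrite -commx2.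
- rewrite !E !jpDr !jpNr !jpZr.
  rewrite (proj2 (IH1 w)) commx2 (proj2 (IH2 (x \oj w))) (proj2 (IH1 (x \oj w))).
  by rewrite commx2.
Qed.

Lemma pw_mul m n : pw m \oj pw n = pw (m + n).
Proof.
elim: n => [|n IH]; first by rewrite pw0 jpu addn0.
by rewrite pwS (proj1 (Pc_pw m _)) IH addnS.
Qed.

Definition pe (p : {poly R}) : vec := \sum_(i < size p) p`_i *: pw i.

Lemma pe_widen (p : {poly R}) n : (size p <= n)%N -> pe p = \sum_(i < n) p`_i *: pw i.
Proof.
move=> le; rewrite /pe (big_ord_widen n (fun i => p`_i *: pw i) le).
rewrite big_mkcond /=; apply: eq_bigr => i _.
by case: ifP => // /negbT; rewrite -leqNgt => h; rewrite nth_default // scale0r.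
Qed.

Lemma peD p q : pe (p + q) = pe p + pe q.
Proof.
set n := maxn (size p) (size q).
rewrite (@pe_widen (p + q) n) ?(@pe_widen p n) ?(@pe_widen q n) ?leq_maxl ?leq_maxr //;
  last by rewrite (leq_trans (size_polyD _ _)).
by rewrite -big_split; apply: eq_bigr => i _; rewrite coefD scalerDl.
Qed.
Lemma peZ c p : pe (c *: p) = c *: pe p.
Proof.
rewrite (@pe_widen (c *: p) (size p)) ?size_scale_leq // /pe scaler_sumr.
by apply: eq_bigr => i _; rewrite coefZ scalerA.
Qed.
Lemma pe0 : pe 0 = 0.
Proof. by rewrite /pe size_poly0 big_ord0. Qed.
Lemma peN p : pe (- p) = - pe p.
Proof. by rewrite -scaleN1r peZ scaleN1r. Qed.
Lemma peB p q : pe (p - q) = pe p - pe q.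
Proof. by rewrite peD peN. Qed.
Lemma peC c : pe c%:P = c *: u.
Proof.
rewrite (@pe_widen _ 1) ?size_polyC ?leq_b1 // big_ord1 coefC /=.
by [].
Qed.
Lemma pe1 : pe 1 = u.
Proof. by rewrite -(scale1r u) -peC. Qed.
Lemma pe_sum I (r : seq I) (P : pred I) (F : I -> {poly R}) :
  pe (\sum_(i <- r | P i) F i) = \sum_(i <- r | P i) pe (F i).
Proof.
elim/big_rec2: _ => [|i y1 y2 _ <-]; first by rewrite pe0.
by rewrite peD.
Qed.

Lemma peXmul p : pe ('X * p) = x \oj pe p.
Proof.
rewrite (@pe_widen _ (size p).+1); last first.
  by rewrite mulrC (leq_trans (size_polyMleq _ _)) // size_polyX addn2.
rewrite big_ord_recl coefXM /= scale0r add0r /pe jp_sumr.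
by apply: eq_bigr => i _; rewrite coefXM /= jpZr add0n.
Qed.
Lemma peX : pe 'X = x.
Proof. by rewrite -(mulr1 'X) peXmul pe1 jpu. Qed.

Lemma Pc_pe p : Pc (pe p).
Proof.
move=> w; rewrite /pe !jp_suml !jp_sumr; split; apply: eq_bigr => i _;
  rewrite !jpZl jpZr; congr (_ *: _); by case: (Pc_pw i w).
Qed.

Lemma pe_polyCmul c q : pe (c%:P * q) = c *: pe q.
Proof. rewrite mul_polyC; exact: peZ. Qed.

Lemma pe_mul p q : pe (p * q) = pe p \oj pe q.
Proof.
elim/poly_ind: p q => [|p c IH] q.
  by rewrite mul0r pe0 jp0l.
rewrite mulrDl -mulrA peD IH pe_polyCmul peXmul.
rewrite peD peC jpDl jpZl Hu (mulrC p) peXmul.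
congr (_ + _); rewrite (proj1 (Pc_pe p _)) (HC (x \oj pe p)) (proj1 (Pc_pe q _)) (HC (pe q)) //.
Qed.

Lemma exists_annih : exists2 p : {poly R}, p != 0 & pe p = 0.
Proof.
pose A : 'M[R]_(d.+1, d) := \matrix_(i < d.+1) pw i.
have nf : ~~ row_free A.
  by rewrite -row_leq_rank -ltnNge ltnS rank_leq_col.
have : kermx A != 0 by rewrite kermx_eq0.
case/rowV0Pn => v /sub_kermxP vA vn0.
exists (\poly_(i < d.+1) v 0 (inord i)).
  apply: contra vn0 => /eqP p0; apply/eqP/rowP => i; rewrite mxE.
  have := congr1 (fun p : {poly R} => p`_i) p0.
  by rewrite coef_poly ltn_ord coef0 inord_val.
rewrite (@pe_widen _ d.+1) ?size_poly //.
rewrite -[RHS]vA mulmx_sum_row; apply: eq_bigr => i _.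
by rewrite coef_poly ltn_ord inord_val rowK.
Qed.

Lemma min_annih : exists2 p : {poly R}, p != 0 &
  pe p = 0 /\ (forall f, pe f = 0 -> p %| f).
Proof.
have [q0 q0n0 q0e] := exists_annih.
suff H : forall n (q : {poly R}), (size q <= n)%N -> q != 0 -> pe q = 0 ->
  exists2 p : {poly R}, p != 0 & pe p = 0 /\ (forall f, pe f = 0 -> p %| f).
  exact: (H _ q0 (leqnn _) q0n0 q0e).
elim=> [|n IH] q qs qn0 qe.
  by move: qs; rewrite leqn0 size_poly_eq0 (negbTE qn0).
case: (classic (exists r : {poly R}, [/\ r != 0, pe r = 0 & (size r < size q)%N])).
  case=> r [rn0 re rs]; apply: (IH r) => //.
  by rewrite -ltnS (leq_trans rs).
move=> nex; exists q => //; split => // f fe.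
apply/modp_eq0P; case: (eqVneq (f %% q) 0) => // rn0; exfalso; apply: nex.
exists (f %% q); split => //; last by rewrite ltn_modp.
have := divp_eq f q => E.
have : pe f = pe (f %/ q * q) + pe (f %% q) by rewrite {1}E peD.
by rewrite pe_mul qe jp0r add0r fe => <-.
Qed.

Section Lag.
Variable rs : seq R.
Hypothesis urs : uniq rs.
Hypothesis hF : forall f : {poly R}, all (root f) rs -> pe f = 0.
Local Notation k := (size rs).
Definition lg (i : 'I_k) : {poly R} :=
  \prod_(j < k | j != i) (('X - (rs`_j)%:P) * ((rs`_i - rs`_j)^-1)%:P).

Lemma rs_neq (i j : 'I_k) : j != i -> rs`_i - rs`_j != 0.
Proof.
move=> ji; rewrite subr_eq0; apply: contra ji => /eqP E.
by rewrite -val_eqE /= -(nth_uniq 0 (ltn_ord j) (ltn_ord i) urs) E.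
Qed.

Lemma lg_eval (i m : 'I_k) : (lg i).[rs`_m] = (i == m)%:R.
Proof.
rewrite /lg horner_prod.
case: (eqVneq i m) => [<-|im].
  rewrite big1 // => j ji; rewrite hornerM hornerXsubC hornerC divff //.
  exact: rs_neq.
rewrite (bigD1 m) 1?eq_sym //= hornerM hornerXsubC subrr mul0r mul0r.
by [].
Qed.

Lemma allrootP (f : {poly R}) : (forall m : 'I_k, f.[rs`_m] = 0) -> all (root f) rs.
Proof.
move=> H; apply/allP => r /(nthP 0) [m mlt <-].
by rewrite /root (H (Ordinal mlt)).
Qed.

Lemma lagrange_decomp : exists (lam : 'I_k -> R) (e : 'I_k -> vec),
  [/\ forall i, e i \oj e i = e i,
      forall i j, i != j -> e i \oj e j = 0,
      \sum_i e i = u &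
      \sum_i lam i *: e i = x].
Proof.
exists (fun i => rs`_i), (fun i => pe (lg i)); split.
- move=> i; rewrite -pe_mul; apply/eqP; rewrite -subr_eq0 -peB; apply/eqP/hF/allrootP => m.
  by rewrite hornerD hornerN hornerM lg_eval; case: (i == m); rewrite /= ?mulr1 ?mulr0 subrr.
- move=> i j ij; rewrite -pe_mul; apply/hF/allrootP => m.
  rewrite hornerM !lg_eval; case: (eqVneq i m) => [<-|]; last by rewrite mul0r.
  by rewrite eq_sym (negbTE ij) mulr0.
- apply/eqP; rewrite -subr_eq0 -pe_sum -pe1 -peB; apply/eqP/hF/allrootP => m.
  rewrite hornerD hornerN horner_sum hornerC.
  rewrite (bigD1 m) //= lg_eval eqxx big1 ?addr0 ?subrr // => j jm.
  by rewrite lg_eval (negbTE jm).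
- apply/eqP; rewrite -subr_eq0.
  have -> : \sum_(i < k) rs`_i *: pe (lg i) = pe (\sum_(i < k) rs`_i *: lg i).
    by rewrite pe_sum; apply: eq_bigr => i _; rewrite peZ.
  rewrite -{1}peX -peB; apply/eqP/hF/allrootP => m.
  rewrite hornerD hornerN horner_sum hornerX.
  rewrite (bigD1 m) //= hornerZ lg_eval eqxx mulr1 big1 ?addr0 ?subrr // => j jm.
  by rewrite hornerZ lg_eval (negbTE jm) mulr0.
Qed.
End Lag.

Theorem spectral : exists k (lam : 'I_k -> R) (e : 'I_k -> vec),
  [/\ forall i, e i \oj e i = e i,
      forall i j, i != j -> e i \oj e j = 0,
      \sum_i e i = u &
      \sum_i lam i *: e i = x].
Proof.
have [p pn0 [pe0' pdiv]] := min_annih.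
have sos : forall f g : {poly R}, p %| f * f + g * g -> p %| f.
  move=> f g /dvdpP [h E]; apply: pdiv.
  have : pe (f * f + g * g) = 0 by rewrite E pe_mul pe0' jp0r.
  rewrite peD !pe_mul => /(congr1 (fun v => ip v u)).
  rewrite ipDl !ip_sq_u ip0l => H.
  apply: ip_eq0; apply/eqP; rewrite eq_le ip_ge0 andbT.
  by rewrite -H lerDl ip_ge0.
have [c [rs [urs Ep]]] := split_sos pn0 sos.
have cn0 : c != 0 by apply: contra pn0 => /eqP c0; rewrite Ep c0 scale0r.
exists (size rs); apply: lagrange_decomp => // f /uniq_roots_dvdp.
rewrite uniq_rootsE => /(_ urs) /dvdpP [h Eh].
rewrite Eh pe_mul.
have -> : pe (\prod_(z <- rs) ('X - z%:P)) = 0.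
  by rewrite -[\prod_(z <- rs) _](scalerK cn0) -Ep peZ pe0' scaler0.
by rewrite jp0r.
Qed.
End Pow.

Section Model.
Variables (X : eqType) (M : seq X -> Prop) (hat : X -> vec) (Om : vec -> Prop).
Hypothesis Hsq : forall v, Epos hat v <-> exists a, v = a \oj a.
Hypothesis Hsd : exists2 G' : 'M[R]_d, inner_product G' &
    (forall a, Epos hat a <-> (forall b, Epos hat b -> 0 <= ipv G' a b)).
Hypothesis Htest : forall x, exists2 E, M E & x \in E.
Hypothesis Hunit : is_unit M hat u.
Hypothesis Hstate : forall a, Om a <-> ((forall e, Epos hat e -> 0 <= dotv a e) /\ dotv a u = 1).

Local Notation Ep := (Epos hat).

Lemma Ep_add a b : Ep a -> Ep b -> Ep (a + b).
Proof.
case: Hsd => G' _ H; rewrite !H => ha hb c hc.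
by rewrite ipvDl_gen addr_ge0 ?ha ?hb.
Qed.
Lemma Ep_scale t a : 0 <= t -> Ep a -> Ep (t *: a).
Proof.
case: Hsd => G' _ H; rewrite !H => ht ha c hc.
by rewrite ipvZl_gen mulr_ge0 ?ha.
Qed.
Lemma Ep_sq a : Ep (a \oj a).
Proof. by apply/Hsq; exists a. Qed.
Lemma Ep0 : Ep 0.
Proof. by rewrite -(jp0l 0); apply: Ep_sq. Qed.
Lemma Ep_sum I (r : seq I) (P : pred I) (F : I -> vec) :
  (forall i, P i -> Ep (F i)) -> Ep (\sum_(i <- r | P i) F i).
Proof.
move=> H; elim/big_rec: _ => [|i y Pi hy]; first exact: Ep0.
by apply: Ep_add => //; apply: H.
Qed.
Lemma Ep_idem e : e \oj e = e -> Ep e.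
Proof. by move=> he; rewrite -he; apply: Ep_sq. Qed.

Lemma Ep_hat x : Ep (hat x).
Proof.
move=> eps eps0; exists (hat x); split; last by move=> i; rewrite subrr normr0.
exists 1%N, (fun _ => 1), (fun _ => hat x); split; first by move=> i; split => //; exists x.
by rewrite big_ord1 scale1r.
Qed.

Lemma Ep_u_hat x : Ep (u - hat x).
Proof.
have [E ME xE] := Htest x.
rewrite (Hunit ME) (big_rem x xE) /= addrAC subrr add0r.
by apply: Ep_sum => y _; apply: Ep_hat.
Qed.
Lemma Ep_u : Ep u.
Proof. by rewrite -(jpu u); apply: Ep_sq. Qed.

Lemma idem_pos e y : e \oj e = e -> Ep y -> 0 <= ip e y.
Proof. by move=> he /Hsq [w ->]; apply: idem_ge0. Qed.

Lemma dotvDr (a b c : vec) : dotv c (a + b) = dotv c a + dotv c b.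
Proof. by rewrite /dotv -big_split; apply: eq_bigr => i _; rewrite mxE mulrDr. Qed.
Lemma dotvZr t (a c : vec) : dotv c (t *: a) = t * dotv c a.
Proof. by rewrite /dotv mulr_sumr; apply: eq_bigr => i _; rewrite mxE mulrCA. Qed.
Lemma dotvNr (a c : vec) : dotv c (- a) = - dotv c a.
Proof. by rewrite -scaleN1r dotvZr mulN1r. Qed.
Lemma dotvBr (a b c : vec) : dotv c (a - b) = dotv c a - dotv c b.
Proof. by rewrite dotvDr dotvNr. Qed.
Lemma dotv0r (c : vec) : dotv c 0 = 0.
Proof. by rewrite /dotv big1 // => i _; rewrite mxE mulr0. Qed.
Lemma dotv_sumr I (r : seq I) (P : pred I) (F : I -> vec) c :
  dotv c (\sum_(i <- r | P i) F i) = \sum_(i <- r | P i) dotv c (F i).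
Proof.
elim/big_rec2: _ => [|i y1 y2 _ <-]; first by rewrite dotv0r.
by rewrite dotvDr.
Qed.
Lemma dotvDl (a b c : vec) : dotv (a + b) c = dotv a c + dotv b c.
Proof. by rewrite /dotv -big_split; apply: eq_bigr => i _; rewrite mxE mulrDl. Qed.
Lemma dotvZl t (a c : vec) : dotv (t *: a) c = t * dotv a c.
Proof. by rewrite /dotv mulr_sumr; apply: eq_bigr => i _; rewrite mxE mulrA. Qed.
Lemma dotvBl (a b c : vec) : dotv (a - b) c = dotv a c - dotv b c.
Proof.
by rewrite dotvDl -scaleN1r dotvZl mulN1r.
Qed.
Lemma ip_dotv (e v : vec) : ip e v = dotv (e *m G) v.
Proof. by rewrite /ipv /dotv [LHS]mxE; apply: eq_bigr => i _; congr (_ * _); rewrite mxE. Qed.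

Lemma state_pos a y : Om a -> Ep y -> 0 <= dotv a y.
Proof. by move/Hstate => [H _]; apply: H. Qed.
Lemma state_u a : Om a -> dotv a u = 1.
Proof. by move/Hstate => [_ H]. Qed.

Lemma closure_ge0 (c : vec) (S : vec -> Prop) v :
  (forall w, S w -> 0 <= dotv c w) -> closure_vec S v -> 0 <= dotv c v.
Proof.
move=> HS Hcl; rewrite leNgt; apply/negP => neg.
set K := \sum_i `|c 0 i| + 1.
have K0 : 0 < K by rewrite /K ltr_wpDl ?sumr_ge0.
have dpos : 0 < - dotv c v by rewrite oppr_gt0.
have [w [Sw nw]] := Hcl (- dotv c v / K) (divr_gt0 dpos K0).
have := HS w Sw; rewrite leNgt => /negP; apply.
have : dotv c w - dotv c v <= \sum_i `|c 0 i| * (- dotv c v / K).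
  rewrite /dotv -sumrB; apply: ler_sum => i _.
  rewrite -mulrBr (le_trans (ler_norm _)) // normrM ler_wpM2l //.
  by rewrite distrC ltW // nw.
have : \sum_i `|c 0 i| * (- dotv c v / K) < - dotv c v.
  rewrite -mulr_suml mulrA ltr_pdivrMr // /K; nra.
lra.
Qed.

Lemma idem_compl f : f \oj f = f -> (u - f) \oj (u - f) = u - f.
Proof.
move=> hf; rewrite jpBl !jpBr !Hu jpu hf.
by apply/rowP => i; rewrite !mxE; lra.
Qed.
Lemma ip_idem_u f : f \oj f = f -> ip f u = ip f f.
Proof. by move=> hf; rewrite -{1}hf Hass jpu. Qed.
Lemma ip_orth f g : f \oj f = f -> f \oj g = 0 -> ip f g = 0.
Proof. by move=> hf hfg; rewrite -hf Hass hfg ip0r. Qed.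

Lemma ip_family k (e : 'I_k -> vec) (c : 'I_k -> R) i :
  (forall i, e i \oj e i = e i) -> (forall i j, i != j -> e i \oj e j = 0) ->
  ip (e i) (\sum_j c j *: e j) = c i * ip (e i) (e i).
Proof.
move=> hi ho; rewrite ip_sumr (bigD1 i) //= ipZr big1 ?addr0 // => j ji.
by rewrite ipZr ip_orth ?mulr0 // ho // eq_sym.
Qed.

Lemma ip_pos_def f : f != 0 -> 0 < ip f f.
Proof. by move=> fn0; rewrite lt_def ip_ge0 andbT; apply: contra fn0 => /eqP/ip_eq0 ->. Qed.

Lemma spec_coef_ge0 y k (lam : 'I_k -> R) (e : 'I_k -> vec) i :
  (forall i, e i \oj e i = e i) -> (forall i j, i != j -> e i \oj e j = 0) ->
  \sum_i lam i *: e i = y -> Ep y -> e i != 0 -> 0 <= lam i.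
Proof.
move=> hi ho hy Ey ein0.
have := idem_pos (hi i) Ey; rewrite -hy ip_family //.
by rewrite pmulr_lge0 // ip_pos_def.
Qed.

Lemma spec_term_Ep y k (lam : 'I_k -> R) (e : 'I_k -> vec) i :
  (forall i, e i \oj e i = e i) -> (forall i j, i != j -> e i \oj e j = 0) ->
  \sum_i lam i *: e i = y -> Ep y -> Ep (lam i *: e i).
Proof.
move=> hi ho hy Ey; case: (eqVneq (e i) 0) => [->|ein0]; first by rewrite scaler0; apply: Ep0.
by apply: Ep_scale; [apply: (spec_coef_ge0 hi ho hy Ey) | apply: Ep_idem].
Qed.

Lemma part_a x a : extremal hat (hat x) -> Om a -> pr hat a x = 1 ->
  primitive_idempotent hat jp (hat x).
Proof.
set y := hat x; case=> Ey yn0 Hext Oa ax.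
have [k [lam [e [hi ho hu hy]]]] := spectral y.
have [i lein0] : exists i, lam i *: e i != 0.
  apply/existsP; apply: contraR yn0; rewrite negb_exists => /forallP H.
  by rewrite -hy big1 // => i _; apply/eqP; move: (H i); rewrite negbK.
have Erest : Ep (\sum_(j | j != i) lam j *: e j).
  by apply: Ep_sum => j _; apply: (spec_term_Ep j hi ho hy Ey).
have Edec : y = lam i *: e i + \sum_(j | j != i) lam j *: e j by rewrite -hy (bigD1 i).
have [t t0 Et] := Hext _ _ (spec_term_Ep i hi ho hy Ey) Erest Edec.
have ein0 : e i != 0 by apply: contra lein0 => /eqP->; rewrite scaler0.
have tn0 : t != 0 by apply: contra lein0 => /eqP t00; rewrite Et t00 scale0r.
have li0 := spec_coef_ge0 hi ho hy Ey ein0.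
set c := lam i / t; set f := e i.
have yE : y = c *: f by rewrite /c /f mulrC -scalerA Et scalerA mulVf // scale1r.
have c0 : 0 <= c by rewrite /c divr_ge0.
have hf : f \oj f = f := hi i.
have c1 : c <= 1.
  have := idem_pos hf (Ep_u_hat x); rewrite -/y ipBr ip_idem_u // yE ipZr.
  have := ip_pos_def ein0; rewrite -/f; nra.
have c2 : 1 <= c.
  have af0 := state_pos Oa (Ep_idem hf).
  have := state_pos Oa (Ep_idem (idem_compl hf)); rewrite dotvBr (state_u Oa).
  move: ax; rewrite /pr -/y yE dotvZr; nra.
have c11 : c = 1 by apply/eqP; rewrite eq_le c1 c2.
have yf : y = f by rewrite yE c11 scale1r.
split.
- by split => //; rewrite yf.
- by [].
- case=> m [g [Hg Eg]].
  case: m g Hg Eg => [|m] g Hg Eg; first by move/eqP: yn0; rewrite Eg big_ord0.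
  move: Eg; rewrite big_ord_recl => Eg.
  have [[Eg0 g0i] [g0n0 g0y]] := Hg ord0.
  have Er : Ep (\sum_(i0 < m) g (lift ord0 i0)).
    by apply: Ep_sum => j _; have [[? _] _] := Hg (lift ord0 j).
  have [s s0 Es] := Hext _ _ Eg0 Er Eg.
  have yy : y \oj y = y by rewrite yf.
  have : (s * s - s) *: y = 0.
    by rewrite scalerBl -scalerA -{2}Es -g0i Es jpZl jpZr yy subrr.
  move/eqP; rewrite scaler_eq0 (negbTE yn0) orbF subr_eq0 => /eqP ss.
  have : s * (s - 1) = 0 by rewrite mulrBr mulr1 ss subrr.
  move/eqP; rewrite mulf_eq0 subr_eq0 => /orP[/eqP s00|/eqP s1].
    by move/eqP: g0n0; apply; rewrite Es s00 scale0r.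
  by move/eqP: g0y; apply; rewrite Es s1 scale1r.
Qed.

Section Uniform.
Variables (n : nat) (m : vec).
Hypothesis Hn : forall E, M E -> size E = n.
Hypothesis Om_m : Om m.
Hypothesis Hm : forall x, pr hat m x = n%:R^-1.
Variable x0 : X.

Lemma n_gt0 : (0 < n)%N.
Proof.
have [E ME xE] := Htest x0; rewrite -(Hn ME).
by case: E xE ME.
Qed.
Lemma ninv_gt0 : 0 < n%:R^-1 :> R.
Proof. by rewrite invr_gt0 ltr0n n_gt0. Qed.

Lemma m_idem f : f \oj f = f -> f != 0 -> n%:R^-1 <= dotv m f.
Proof.
move=> hf fn0.
have pf := ip_pos_def fn0.
set phi := m - (n%:R^-1 / ip f f) *: (f *m G).
have Hphi v : dotv phi v = dotv m v - n%:R^-1 / ip f f * ip f v.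
  by rewrite /phi dotvBl (dotvZl (n%:R^-1 / ip f f) (f *m G)) [ip f v]ip_dotv.
suff : 0 <= dotv phi f.
  by rewrite Hphi -mulrA mulVf ?lt0r_neq0 // mulr1 subr_ge0.
apply: (closure_ge0 _ (Ep_idem hf)).
move=> w [k [c [s [Hcs ->]]]].
rewrite dotv_sumr; apply: sumr_ge0 => i _.
have [c0 [y ->]] := Hcs i.
rewrite dotvZr mulr_ge0 // Hphi.
have : 0 <= ip f (u - hat y) by apply: idem_pos => //; apply: Ep_u_hat.
rewrite ipBr ip_idem_u // => H.
have := Hm y; rewrite /pr => ->.
have r1 : ip f (hat y) / ip f f <= 1 by rewrite ler_pdivrMr // mul1r -subr_ge0.
have := ninv_gt0; rewrite mulrAC; nra.
Qed.

Lemma part_b x a : Om a -> pr hat a x = 1 -> extremal hat (hat x).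
Proof.
set y := hat x => Oa ax.
have Ey : Ep y := Ep_hat x.
have Euy : Ep (u - y) := Ep_u_hat x.
have yn0 : y != 0.
  apply/eqP => y0; move: ax; rewrite /pr -/y y0 dotv0r => /eqP; by rewrite eq_sym oner_eq0.
have [k [lam [e [hi ho hu hy]]]] := spectral y.
have lam0 i : e i != 0 -> 0 <= lam i := spec_coef_ge0 hi ho hy Ey.
have lam1 i : e i != 0 -> lam i <= 1.
  move=> ein0; have := idem_pos (hi i) Euy.
  rewrite ipBr ip_idem_u // -hy ip_family //.
  have := ip_pos_def ein0; nra.
have terms : forall i, 0 <= (1 - lam i) * dotv a (e i).
  move=> i; case: (eqVneq (e i) 0) => [->|ein0]; first by rewrite dotv0r mulr0.
  by rewrite mulr_ge0 ?subr_ge0 ?lam1 // (state_pos Oa (Ep_idem (hi i))).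
have sum0 : \sum_i (1 - lam i) * dotv a (e i) = 0.
  have : dotv a u - dotv a y = 0 by rewrite (state_u Oa); move: ax; rewrite /pr => ->; rewrite subrr.
  rewrite -hu -hy !dotv_sumr -sumrB => E; rewrite -[RHS]E; apply: eq_bigr => i _.
  by rewrite dotvZr mulrBl mul1r.
have [i0 ai0] : exists i0, dotv a (e i0) != 0.
  apply: NNPP => nex; have := state_u Oa.
  rewrite -hu dotv_sumr big1 => [/eqP|i _]; first by rewrite eq_sym oner_eq0.
  by apply/eqP; apply: contraT => ne; exfalso; apply: nex; exists i.
have l1 : lam i0 = 1.
  have /eqP := (@psumr_eq0P _ _ _ _ (fun i _ => terms i) sum0 i0 isT).
  by rewrite mulf_eq0 (negbTE ai0) orbF subr_eq0 => /eqP.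
have ei0n0 : e i0 != 0 by apply: contra ai0 => /eqP->; rewrite dotv0r.
have my : dotv m y = n%:R^-1 by have := Hm x.
have mterms : forall j, 0 <= lam j * dotv m (e j).
  move=> j; case: (eqVneq (e j) 0) => [->|ejn0]; first by rewrite dotv0r mulr0.
  by rewrite mulr_ge0 ?lam0 // (state_pos Om_m (Ep_idem (hi j))).
have rest0 : \sum_(j | j != i0) lam j * dotv m (e j) = 0.
  apply/eqP; rewrite eq_le sumr_ge0 // andbT.
  have : dotv m y = lam i0 * dotv m (e i0) + \sum_(j | j != i0) lam j * dotv m (e j).
    by rewrite -hy dotv_sumr (bigD1 i0) //=; congr (_ + _); rewrite ?dotvZr //;
       apply: eq_bigr => j _; rewrite dotvZr.
  rewrite l1 mul1r my => E.
  have := m_idem (hi i0) ei0n0; lra.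
have yE : y = e i0.
  rewrite -hy (bigD1 i0) //= l1 scale1r big1 ?addr0 // => j ji0.
  case: (eqVneq (e j) 0) => [->|ejn0]; first by rewrite scaler0.
  have /eqP := @psumr_eq0P _ _ _ _ (fun j _ => mterms j) rest0 j ji0.
  rewrite mulf_eq0 => /orP[/eqP->|/eqP md0]; first by rewrite scale0r.
  by move: (m_idem (hi j) ejn0); rewrite md0 leNgt ninv_gt0.
have hyy : y \oj y = y by rewrite yE hi.
have Euy' : (u - y) \oj (u - y) = u - y := idem_compl hyy.
split => // b c Eb Ec Ebc.
have ipb : ip (u - y) b = 0.
  have h1 := idem_pos Euy' Eb; have h2 := idem_pos Euy' Ec.
  have : ip (u - y) y = 0.
    by rewrite ipC ipBr ip_idem_u // subrr.
  move=> H; have : ip (u - y) (b + c) = 0 by rewrite -Ebc.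
  rewrite ipDr; lra.
have [kb [mu [g [gi go gu gb]]]] := spectral b.
have mu0 j : g j != 0 -> 0 <= mu j := spec_coef_ge0 gi go gb Eb.
have gterms j : 0 <= mu j * ip (u - y) (g j).
  case: (eqVneq (g j) 0) => [->|gjn0]; first by rewrite ip0r mulr0.
  by rewrite mulr_ge0 ?mu0 //; apply: idem_pos => //; apply: Ep_idem.
have gsum : \sum_j mu j * ip (u - y) (g j) = 0.
  by rewrite -[RHS]ipb -gb ip_sumr; apply: eq_bigr => j _; rewrite ipZr.
have key j : mu j *: g j = (if g j == y then mu j else 0) *: y.
  case: (eqVneq (g j) y) => [->//|gjy]; rewrite scale0r.
  case: (eqVneq (g j) 0) => [->|gjn0]; first by rewrite scaler0.
  case: (eqVneq (mu j) 0) => [->|mun0]; first by rewrite scale0r.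
  exfalso.
  have /eqP := @psumr_eq0P _ _ _ _ (fun j _ => gterms j) gsum j isT.
  rewrite mulf_eq0 (negbTE mun0) /= => /eqP ip0.
  have : (u - y) \oj g j = 0 by apply: idem_eq0 => //; rewrite gi.
  rewrite jpBl Hu => /eqP; rewrite subr_eq0 => /eqP yg.
  set h := y - g j.
  have hh : h \oj h = h.
    rewrite /h jpBl !jpBr hyy -yg (HC (g j) y) -yg gi.
    by apply/rowP => i; rewrite !mxE; lra.
  have hn0 : h != 0 by rewrite /h subr_eq0 eq_sym.
  have := m_idem (gi j) gjn0; have := m_idem hh hn0.
  rewrite /h dotvBr my => H1 H2.
  have := ninv_gt0; lra.
exists (\sum_j (if g j == y then mu j else 0)).
  apply: sumr_ge0 => j _; case: ifP => // /eqP gjy; apply: mu0.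
  by rewrite gjy.
by rewrite -gb scaler_suml; apply: eq_bigr => j _; rewrite key.
Qed.
End Uniform.
End Model.
End Jordan.

Theorem lemma8 (R : realType) (d : nat) (X : eqType) (M : seq X -> Prop)
    (hat : X -> 'rV[R]_d) (Om : 'rV[R]_d -> Prop) (u : 'rV[R]_d)
    (jp : 'rV[R]_d -> 'rV[R]_d -> 'rV[R]_d) :
  prob_model M hat Om u ->
  HSD hat ->
  EJA_product hat jp u ->
  [/\ (forall x : X, extremal hat (hat x) -> unital_outcome hat Om x ->
         primitive_idempotent hat jp (hat x)),
      (uniform M hat Om ->
         forall x : X, unital_outcome hat Om x ->
           extremal hat (hat x) /\ primitive_idempotent hat jp (hat x)) &
      (unital_model hat Om -> uniform M hat Om -> jordan_model hat jp)].
Proof.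
move=> [_ [Htest [_ [_ [_ [_ [_ [Hunit [Hstate _]]]]]]]]] HH.
have [_ Hsd] := HH.
move=> [Hlin [HC [HJ [Hu [[G HG Hass] Hsq]]]]].
have pa : forall x : X, extremal hat (hat x) -> unital_outcome hat Om x ->
         primitive_idempotent hat jp (hat x).
  move=> x ex [a Oa ax].
  exact: (part_a Hlin HC HJ Hu HG Hass Hsq Hsd Htest Hunit Hstate ex Oa ax).
have pb : uniform M hat Om -> forall x : X, unital_outcome hat Om x ->
           extremal hat (hat x) /\ primitive_idempotent hat jp (hat x).
  move=> [n [Hn [m Om_m Hm]]] x ux.
  have ex : extremal hat (hat x).
    case: ux => a Oa ax.
    exact: (part_b Hlin HC HJ Hu HG Hass Hsq Hsd Htest Hunit Hstate Hn Om_m Hm x Oa ax).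
  by split => //; apply: pa.
split => // Hun Hunif; split => // x.
by have [] := pb Hunif x (Hun x).
Qed.
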